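(* Let $\mathbb{F},\widetilde{\mathbb{F}}$ be arbitrary fields of characteristic not $2$, and let $f:\mathbb{F}\to\widetilde{\mathbb{F}}$ be an SD-map. Then $f$ is injective, multiplicative (i.e.\ $f(xy)=f(x)f(y)$ for all $x,y\in\mathbb{F}$), and odd (i.e.\ $f(-x)=-f(x)$ for all $x$), and $f(0)=0$, $f(1)=1$.
   Context: A map $f:\mathbb{F}\to\widetilde{\mathbb{F}}$ between fields is called an SD-map if for all $x\neq y$ in $\mathbb{F}$ one has $f(x)\neq f(y)$ and \[ f\left(\frac{x+y}{x-y}\right)=\frac{f(x)+f(y)}{f(x)-f(y)}. \] *)

(* Defs.v *)
From mathcomp Require Import all_boot all_algebra.
Set Implicit Arguments. Unset Strict Implicit. Unset Printing Implicit Defensive.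
Import GRing.Theory.
Local Open Scope ring_scope.

Definition SD_map (F G : fieldType) (f : F -> G) : Prop :=
  forall x y : F, x != y ->
    f x != f y /\ f ((x + y) / (x - y)) = (f x + f y) / (f x - f y).

(* Main.v *)
Require Import Defs.
From mathcomp Require Import all_boot all_algebra.
From mathcomp Require Import ring.
Import GRing.Theory.
Local Open Scope ring_scope.

Lemma two_nz (F : fieldType) : ~~ (2%N \in [pchar F]) -> (2 : F) != 0.
Proof. by move=> h; apply: contra h => h2; rewrite inE /= h2. Qed.

Lemma key (G : fieldType) (A B C : G) : (2 : G) != 0 -> A - B != 0 -> C - 1 != 0 ->
  (A + B) / (A - B) = (C + 1) / (C - 1) -> A = B * C.
Proof.
move=> h2 hAB hC /eqP; rewrite eqr_div // => /eqP H.
apply/eqP; rewrite -subr_eq0; apply/eqP; apply: (mulIf h2); rewrite mul0r.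
have -> : (A - B * C) * 2 = (C + 1) * (A - B) - (A + B) * (C - 1) by ring.
by rewrite H subrr.
Qed.

Lemma mdiv (G : fieldType) (b p q : G) : q != 0 -> b = p / q -> b * q = p.
Proof. by move=> hq ->; rewrite divfK. Qed.

Lemma feq (F : fieldType) (x y : F) : x != 0 -> y - 1 != 0 ->
  (x * y + x) / (x * y - x) = (y + 1) / (y - 1).
Proof.
move=> hx hy; field; rewrite hy /=.
rewrite (_ : x * y - x = x * (y - 1)); first exact: mulf_neq0.
by ring.
Qed.
Arguments feq {F x y}.
Arguments mdiv {G b p q}.
Arguments key {G A B C}.

Theorem theorem2p1 (F G : fieldType) (f : F -> G)
  (hF : ~~ (2%N \in [pchar F])) (hG : ~~ (2%N \in [pchar G]))
  (hf : SD_map f) :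
  injective f /\ (forall x y : F, f (x * y) = f x * f y) /\
  (forall x : F, f (- x) = - f x) /\ f 0 = 0 /\ f 1 = 1.
Proof.
have h2F := two_nz _ hF; have h2G := two_nz _ hG.
have inj : injective f.
  move=> x y hxy; apply/eqP; apply: contraT => /hf [] /eqP; by rewrite hxy.
have n1m1 : (1 : F) != -1.
  apply: contra h2F => /eqP h; apply/eqP.
  by rewrite -[2]/(1 + 1) [X in X + _]h addNr.
have n10 : (1 : F) != 0 := oner_neq0 F.
have nm10 : (-1 : F) != 0 by rewrite oppr_eq0.
have [d1 e1] := hf 1 0 n10.
have [d2 e2] := hf (-1) 0 nm10.
have [d3 e3] := hf 1 (-1) n1m1.
rewrite subr0 addr0 divff // in e1.
rewrite subr0 addr0 divff // in e2.
have nz : forall u v : G, u != v -> u - v != 0 by move=> u v; rewrite subr_eq0.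
move: (nz _ _ d1) (nz _ _ d2) (nz _ _ d3) => z1 z2 z3.
have b1 : f 1 = 1.
  have {}e1 := mdiv z1 e1. have {}e2 := mdiv z2 e2.
  have : (f 1 - 1) * (f 1 - f (-1)) = 0.
    have -> : (f 1 - 1) * (f 1 - f (-1)) = (f 1 * (f 1 - f 0) - (f 1 + f 0)) - (f 1 * (f (-1) - f 0) - (f (-1) + f 0)) by ring.
    by rewrite e1 e2 !subrr.
  move/eqP; rewrite mulf_eq0 (negbTE z3) orbF subr_eq0 => /eqP //.
have a0 : f 0 = 0.
  have {}e1 := mdiv z1 e1; rewrite b1 in e1.
  have : f 0 * 2 = (1 + f 0) - 1 * (1 - f 0) by ring.
  by rewrite -e1 subrr => /eqP; rewrite mulf_eq0 (negbTE h2G) orbF => /eqP.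
have c1 : f (-1) = -1.
  have n01 : (0:F) != 1 by rewrite eq_sym oner_neq0.
  have [_ e4] := hf 0 1 n01.
  by move: e4; rewrite a0 b1 !add0r !mul1r !invrN1.
have mul : forall x y : F, f (x * y) = f x * f y.
  move=> x y.
  have [->|x0] := eqVneq x 0; first by rewrite mul0r a0 mul0r.
  have [->|y0] := eqVneq y 0; first by rewrite mulr0 a0 mulr0.
  have [->|y1] := eqVneq y 1; first by rewrite mulr1 b1 mulr1.
  have y1' : y - 1 != 0 by rewrite subr_eq0.
  have nxy : x * y != x.
    rewrite -subr_eq0 (_ : x * y - x = x * (y - 1)); first exact: mulf_neq0.
    by ring.
  have [d5 e5] := hf _ _ nxy.
  have [d6 e6] := hf _ _ y1.
  have eq := feq x0 y1'.
  rewrite eq e6 b1 in e5.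
  apply: (key h2G (nz _ _ d5)) => //.
  by rewrite -b1; apply: nz.
split => //; split => //; split; last by [].
by move=> x; rewrite -mulN1r mul c1 mulN1r.
Qed.
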